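(* Let $X$ be a finite quandle, $\Lambda$ a finite abelian group, $\phi:X\times X\to\Lambda$ a quandle $2$-cocycle with $Q=\Lambda\times_\phi X$ connected, and $\pi:Q\to X$, $(\lambda,a)\mapsto a$. Let $K$ be an oriented knot, $T$ a $1$-tangle diagram with closure $K$, top arc $b_0$, bottom arc $b_1$, and write $\Phi_\phi(K)=\sum_{\lambda\in\Lambda}n_\lambda\lambda$. Fix $x\in X$, let $e=(1,x)$, let $\mathscr{C}_0$ be the set of colorings $C$ of $T$ by $Q$ with $C(b_0)=e$ and $\pi C(b_1)=x$, and let $\mathscr{C}_1=\mathrm{Col}^e_Q(T)\setminus\mathscr{C}_0$. Then $$\Psi^e_Q(K)=\frac{1}{|X|}\sum_{\lambda\in\Lambda} n_\lambda\,(\lambda,x)+\sum_{C\in\mathscr{C}_1}C(b_1).$$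
   Context: A quandle is a set with operation $*$ satisfying $a*a=a$; unique right division; $(a*b)*c=(a*c)*(b*c)$. $R_a(y)=y*a$; connected means the group generated by the $R_a$ acts transitively. A quandle $2$-cocycle is $\phi:X\times X\to\Lambda$ ($\Lambda$ abelian, multiplicative) with $\phi(a,a)=1$ and $\phi(a,b)\phi(a*b,c)=\phi(a,c)\phi(a*c,b*c)$; $\Lambda\times_\phi X$ is $\Lambda\times X$ with $(\lambda,a)*(\mu,b)=(\lambda\phi(a,b),a*b)$. Colorings: arcs of an oriented diagram get colors so that at each crossing $\tau$ with source colors $(x_\tau,y_\tau)$ (incoming under-arc, over-arc) the outgoing under-arc gets $x_\tau*y_\tau$; $\epsilon(\tau)$ is the crossing sign; $B_\phi(K,C)=\prod_\tau\phi(x_\tau,y_\tau)^{\epsilon(\tau)}$ and $\Phi_\phi(K)=\sum_C B_\phi(K,C)\in\mathbb{Z}[\Lambda]$ over all colorings of $K$ by $X$. A $1$-tangle is a properly embedded oriented arc in a 3-ball up to isotopy rel boundary, oriented top to bottom, with closure obtained by joining endpoints with a trivial arc; end colors need not agree. $\mathrm{Col}^e_Q(T)$ is the set of colorings $C$ of $T$ by $Q$ with $C(b_0)=e$, and $\Psi^e_Q(K)=\sum_{C\in\mathrm{Col}^e_Q(T)}C(b_1)$, a formal $\mathbb{Z}$-linear combination of elements of $Q$. *)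

(* Defs.v *)
From HB Require Import structures.
From mathcomp Require Import all_boot all_order all_algebra all_fingroup.
Set Implicit Arguments.
Unset Strict Implicit.
Unset Printing Implicit Defensive.
Import GRing.Theory Num.Theory.

Definition is_quandle (X : finType) (op : X -> X -> X) : Prop :=
  [/\ forall a, op a a = a,
      forall b, bijective (fun y => op y b)
    & forall a b c, op (op a b) c = op (op a c) (op b c)].

Definition quandle_cocycle (X : finType) (op : X -> X -> X)
    (L : finGroupType) (phi : X -> X -> L) : Prop :=
  (forall a, phi a a = 1%g) /\
  (forall a b c,
     (phi a b * phi (op a b) c = phi a c * phi (op a c) (op b c))%g).

Definition ext_op (X : finType) (op : X -> X -> X) (L : finGroupType)
    (phi : X -> X -> L) : (L * X)%type -> (L * X)%type -> (L * X)%type :=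
  fun p q => ((p.1 * phi p.2 q.2)%g, op p.2 q.2).

(* Connected: the group generated by the right translations R_a acts
   transitively, i.e. any two elements are related by a finite chain of
   applications of the R_a and their inverses. *)
Definition connected_quandle (Y : finType) (op : Y -> Y -> Y) : Prop :=
  forall y z : Y,
    connect [rel u v | [exists a, (v == op u a) || (u == op v a)]] y z.

(* Walking along the oriented strand
   from the top end to the bottom end, the strand passes 2n times through a
   crossing; these passages are numbered 0, ..., 2n-1 in order.  Crossing c
   is passed under at passage [gd_under c] and over at passage [gd_over c];
   [gd_sign c] is true iff the crossing is positive.
   The strand is cut by the passages into 2n+1 segments 0, ..., 2n:
   segment k enters passage k and segment k+1 leaves it.  Segment 0 lies on
   the top arc b_0, segment 2n on the bottom arc b_1. *)
Record gauss_diagram (n : nat) := GaussDiagram {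
  gd_under : 'I_n -> 'I_(2 * n);
  gd_over  : 'I_n -> 'I_(2 * n);
  gd_sign  : 'I_n -> bool }.

Definition gd_pass n (D : gauss_diagram n) (s : ('I_n + 'I_n)%type)
  : 'I_(2 * n) :=
  match s with inl c => gd_under D c | inr c => gd_over D c end.

Definition crossing_of n (D : gauss_diagram n) (p : 'I_(2 * n))
  : option 'I_n := [pick c | (gd_under D c == p) || (gd_over D c == p)].

(* Darts of the 4-valent graph of the closure K: (p, false) is the incoming
   half-edge at passage p, (p, true) the outgoing one. *)
Definition dart n := ('I_(2 * n) * bool)%type.

(* The edge involution (passages are cyclically joined in the closure). *)
Definition dart_alpha n (d : dart n) : dart n :=
  if d.2 then (ordS d.1, false) else (ord_pred d.1, true).

(* Counterclockwise rotation at a crossing, with under-passage u and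
   over-passage o.  Positive crossing: in_u -> out_o -> out_u -> in_o;
   negative crossing: in_u -> in_o -> out_u -> out_o. *)
Definition dart_sigma n (D : gauss_diagram n) (d : dart n) : dart n :=
  match crossing_of D d.1 with
  | Some c =>
      let u := gd_under D c in let o := gd_over D c in let s := gd_sign D c in
      if d.1 == u then (o, s (+) d.2) else (u, d.2 (+) ~~ s)
  | None => d
  end.

Definition face_step n (D : gauss_diagram n) (d : dart n) : dart n :=
  dart_sigma D (dart_alpha d).

(* Planarity of the closure (a 4-valent map with n vertices, 2n edges,
   connected): Euler characteristic 2, i.e. n+2 faces; the crossingless
   diagram is planar. *)
Definition planar_diagram n (D : gauss_diagram n) : Prop :=
  n = 0%N \/ fcard (face_step D) (@predT (dart n)) = (n + 2)%N.

(* A genuine (classical) 1-tangle diagram: each passage belongs to exactly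
   one crossing, as the under- or as the over-passage, and the rotation
   system is spherical. *)
Definition valid_diagram n (D : gauss_diagram n) : Prop :=
  injective (gd_pass D) /\ planar_diagram D.

Definition segcol n (Y : Type) := {ffun 'I_(2 * n).+1 -> Y}.

(* Coloring condition: colors are constant along arcs (through over-passages)
   and at crossing c with source colors (x_c, y_c) the other under-segment
   gets x_c * y_c.  The under-segment in the source region is the incoming
   one at a positive and the outgoing one at a negative crossing. *)
Definition is_coloring (Y : finType) (op : Y -> Y -> Y) n
    (D : gauss_diagram n) (C : segcol n Y) : bool :=
  [forall c : 'I_n,
     let u : nat := gd_under D c in let o : nat := gd_over D c in
     (C (inord o) == C (inord o.+1)) &&
     (if gd_sign D c then C (inord u.+1) == op (C (inord u)) (C (inord o))
      else C (inord u) == op (C (inord u.+1)) (C (inord o)))].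

Definition tangle_colorings (Y : finType) (op : Y -> Y -> Y) n
    (D : gauss_diagram n) : {set segcol n Y} :=
  [set C | is_coloring op D C].

Definition top_col n (Y : Type) (C : segcol n Y) : Y := C ord0.
Definition bot_col n (Y : Type) (C : segcol n Y) : Y := C ord_max.

(* Colorings of the closure K: the closing arc has no crossings, so these are
   the tangle colorings whose two end colors agree. *)
Definition knot_colorings (Y : finType) (op : Y -> Y -> Y) n
    (D : gauss_diagram n) : {set segcol n Y} :=
  [set C in tangle_colorings op D | top_col C == bot_col C].

Definition weight (X : finType) (L : finGroupType) (phi : X -> X -> L) n
    (D : gauss_diagram n) (C : segcol n X) : L :=
  (\prod_(c < n)
     (let u : nat := gd_under D c in let o : nat := gd_over D c in
      if gd_sign D c then phi (C (inord u)) (C (inord o))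
      else (phi (C (inord u.+1)) (C (inord o)))^-1))%g.

(* Formal Z-linear combination sum_{i in A} f(i) of elements of Y,
   as its coefficient function. *)
Definition fsum (I Y : finType) (A : {set I}) (f : I -> Y) : {ffun Y -> int} :=
  [ffun y => Posz #|[set i in A | f i == y]|].

(* Phi_phi(K) = sum_C B_phi(K,C) in Z[L]; its coefficient at l is n_l. *)
Definition cocycle_invariant (X : finType) (op : X -> X -> X)
    (L : finGroupType) (phi : X -> X -> L) n (D : gauss_diagram n)
  : {ffun L -> int} :=
  fsum (knot_colorings op D) (weight phi D).

Definition col_e (Y : finType) (op : Y -> Y -> Y) n (D : gauss_diagram n)
    (e : Y) : {set segcol n Y} :=
  [set C in tangle_colorings op D | top_col C == e].

Definition Psi (Y : finType) (op : Y -> Y -> Y) n (D : gauss_diagram n)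
    (e : Y) : {ffun Y -> int} :=
  fsum (col_e op D e) (@bot_col n Y).

(* Main.v *)
Require Import Defs.
From HB Require Import structures.
From mathcomp Require Import all_boot all_order all_algebra all_fingroup.
Import GRing.Theory Num.Theory.
Set Implicit Arguments.
Unset Strict Implicit.

Definition cmul (L : finGroupType) (H : forall a b : L, (a*b = b*a)%g) :=
  fun a b : L => (a*b)%g.
HB.instance Definition _ (L : finGroupType) (H : forall a b : L, (a*b = b*a)%g) :=
  Monoid.isComLaw.Build L 1%g (cmul H) (fun a b c => mulgA a b c) H (fun a => mul1g a).

Section S.
Variables (X : finType) (opX : X -> X -> X) (L : finGroupType) (phi : X -> X -> L).
Variables (n : nat) (D : gauss_diagram n).
Hypothesis LC : forall a b : L, (a*b = b*a)%g.
Hypothesis inj : injective (gd_pass D).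
Local Notation N := (2 * n).
Local Notation cm := (cmul LC).

Lemma pass_onto (p : 'I_N) : exists s, gd_pass D s = p.
Proof.
have h : #|{: 'I_N}| <= #|{: ('I_n + 'I_n)%type}|.
  by rewrite card_sum !card_ord addnn mul2n.
have := inj_card_onto inj h p.
by case/codomP=> s ->; exists s.
Qed.

Lemma under_inj : injective (gd_under D).
Proof. by move=> c c' h; have : gd_pass D (inl c) = gd_pass D (inl c') by []; move/inj=> [->]. Qed.

Lemma under_over c c' : gd_under D c <> gd_over D c'.
Proof. by move=> h; have : gd_pass D (inl c) = gd_pass D (inr c') by []; move/inj. Qed.

Definition wp (F : 'I_n -> L) (p : nat) := \big[cm/1%g]_(c | (gd_under D c : nat) == p) F c.

Lemma prod_partition F : \big[cm/1%g]_(c < n) F c = \big[cm/1%g]_(p < N) wp F p.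
Proof.
by rewrite (partition_big (gd_under D) predT).
Qed.

Lemma wp_under F c : wp F (gd_under D c) = F c.
Proof.
rewrite /wp (big_pred1 c) // => c'; apply/eqP/eqP => [h|->//].
by apply: under_inj; apply: val_inj.
Qed.

Lemma wp_over F c : wp F (gd_over D c) = 1%g.
Proof.
rewrite /wp big_pred0 // => c'; apply/eqP => h.
by apply: (@under_over c' c); apply: val_inj.
Qed.


Definition termX (C : segcol n X) (c : 'I_n) : L :=
  let u : nat := gd_under D c in let o : nat := gd_over D c in
  if gd_sign D c then phi (C (inord u)) (C (inord o))
  else (phi (C (inord u.+1)) (C (inord o)))^-1%g.

Lemma weightE C : weight phi D C = \big[cm/1%g]_(c < n) termX C c.
Proof. by []. Qed.

Definition lamX C i := \big[cm/1%g]_(0 <= p < i) wp (termX C) p.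

Lemma lamS C i : lamX C i.+1 = cm (lamX C i) (wp (termX C) i).
Proof. by rewrite /lamX big_nat_recr. Qed.

Lemma lam0 C : lamX C 0 = 1%g.
Proof. by rewrite /lamX big_geq. Qed.

Lemma lamN C : lamX C N = weight phi D C.
Proof. by rewrite weightE prod_partition /lamX big_mkord. Qed.

Local Notation Q := (L * X)%type.
Local Notation opQ := (ext_op opX phi).

Definition proj (C : segcol n Q) : segcol n X := [ffun i => (C i).2].

Lemma stepQ C : is_coloring opQ D C -> forall p, p < N ->
  (C (inord p.+1)).1 = cm (C (inord p)).1 (wp (termX (proj C)) p).
Proof.
move=> /forallP Hc p hp.
have [[c|c] hs] := pass_onto (Ordinal hp).
- have hu : (gd_under D c : nat) = p by rewrite /= in hs; rewrite hs.
  rewrite -hu wp_under /termX !ffunE.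
  move: (Hc c) => /= /andP[_].
  case: (gd_sign D c) => /eqP ->; rewrite /cmul /ext_op /= ?mulgK //.
- have ho : (gd_over D c : nat) = p by rewrite /= in hs; rewrite hs.
  rewrite -ho wp_over.
  move: (Hc c) => /= /andP[/eqP h _].
  by rewrite -h /cmul mulg1.
Qed.

Lemma lamQ C : is_coloring opQ D C -> (C ord0).1 = 1%g ->
  forall i, i <= N -> (C (inord i)).1 = lamX (proj C) i.
Proof.
move=> Hc top; elim=> [_|i IH hi].
  rewrite lam0 -top; congr (C _).1; apply: val_inj; by rewrite /= inordK.
by rewrite lamS -IH ?stepQ // ltnW.
Qed.

Definition lift (C : segcol n X) : segcol n Q := [ffun i : 'I_N.+1 => (lamX C i, C i)].

Lemma liftE C i : i <= N -> lift C (inord i) = (lamX C i, C (inord i)).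
Proof. by move=> h; rewrite ffunE inordK. Qed.

Lemma lift_col C : is_coloring opX D C -> is_coloring opQ D (lift C).
Proof.
move=> /forallP Hc; apply/forallP => c /=.
have hu := ltn_ord (gd_under D c); have ho := ltn_ord (gd_over D c).
have hu' := ltnW hu; have ho' := ltnW ho.
rewrite !liftE // !lamS wp_over /cmul mulg1.
move: (Hc c) => /= /andP[/eqP hoo hs]; rewrite hoo eqxx /=.
rewrite wp_under /termX.
case: (gd_sign D c) hs => /eqP hs; rewrite /ext_op /=.
  by rewrite -hoo hs.
by rewrite -hoo hs mulgVK.
Qed.

Lemma proj_lift C : proj (lift C) = C.
Proof. by apply/ffunP => i; rewrite !ffunE. Qed.

Lemma lift_top C : lift C ord0 = (1%g, C ord0).
Proof. by rewrite ffunE lam0. Qed.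

Lemma lift_bot C : lift C ord_max = (weight phi D C, C ord_max).
Proof. by rewrite ffunE /= lamN. Qed.

Lemma proj_inj C1 C2 : is_coloring opQ D C1 -> is_coloring opQ D C2 ->
  (C1 ord0).1 = 1%g -> (C2 ord0).1 = 1%g -> proj C1 = proj C2 -> C1 = C2.
Proof.
move=> h1 h2 t1 t2 e; apply/ffunP => i.
have hi : (i : nat) <= N by rewrite -ltnS.
have ei : i = inord i by rewrite inord_val.
have e2 : (C1 i).2 = (C2 i).2 by have := congr1 (fun f : segcol n X => f i) e; rewrite !ffunE.
have l1 := lamQ h1 t1 hi; have l2 := lamQ h2 t2 hi; rewrite -ei in l1 l2.
move: l1 l2 e2; case: (C1 i) => a b; case: (C2 i) => a' b' /= -> ->.
by rewrite e => ->.
Qed.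

Definition mapc (h : X -> X) (C : segcol n X) : segcol n X := [ffun i => h (C i)].

Lemma col_hom h C : (forall u v, h (opX u v) = opX (h u) (h v)) ->
  is_coloring opX D C -> is_coloring opX D (mapc h C).
Proof.
move=> hh /forallP Hc; apply/forallP => c /=; rewrite !ffunE.
move: (Hc c) => /= /andP[/eqP -> hs]; rewrite eqxx /=.
by case: (gd_sign D c) hs => /eqP ->; rewrite hh.
Qed.

Lemma mapc_inj h : injective h -> injective (mapc h).
Proof.
move=> hi C1 C2 e; apply/ffunP => i; apply: hi.
by have := congr1 (fun f : segcol n X => f i) e; rewrite !ffunE.
Qed.

Hypothesis dist : forall a b c, opX (opX a b) c = opX (opX a c) (opX b c).
Hypothesis cocy : forall a b c,
     (phi a b * phi (opX a b) c = phi a c * phi (opX a c) (opX b c))%g.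

Lemma phiR s t a :
  phi (opX s a) (opX t a) = ((phi s a)^-1 * phi s t * phi (opX s t) a)%g.
Proof. by rewrite -mulgA cocy mulKg. Qed.

Definition Dl (C : segcol n X) a p :=
  (phi (C (inord p.+1)) a * (phi (C (inord p)) a)^-1)%g.

Lemma termR C a c : is_coloring opX D C ->
  termX (mapc (opX^~ a) C) c = cm (termX C c) (Dl C a (gd_under D c)).
Proof.
move=> /forallP Hc; rewrite /termX /Dl /cmul !ffunE.
move: (Hc c) => /= /andP[_].
case: (gd_sign D c) => /eqP hs; rewrite phiR.
  by rewrite -hs (LC (phi _ a)^-1) -mulgA (LC (phi _ a)^-1).
rewrite -hs !invMg invgK.
by rewrite [X in X = _]LC -mulgA.
Qed.

Lemma tele C a i : \big[cm/1%g]_(0 <= p < i) Dl C a p =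
  ((phi (C (inord i)) a) * (phi (C (inord 0)) a)^-1)%g.
Proof.
elim: i => [|i IH]; first by rewrite big_geq // mulgV.
rewrite big_nat_recr //= IH /Dl /cmul.
by rewrite [X in X = _]LC -mulgA mulKg.
Qed.

Lemma weight_R C a : is_coloring opX D C -> top_col C = bot_col C ->
  weight phi D (mapc (opX^~ a) C) = weight phi D C.
Proof.
move=> Hc tb; rewrite !weightE.
rewrite (eq_bigr (fun c => cm (termX C c) (Dl C a (gd_under D c)))); last first.
  by move=> c _; rewrite termR.
rewrite big_split /=.
suff -> : \big[cm/1%g]_(c < n) Dl C a (gd_under D c) = 1%g by rewrite /cmul mulg1.
rewrite prod_partition.
rewrite (eq_bigr (fun p : 'I_N => Dl C a p)); last first.
  move=> p _; have [[c|c] <-] := pass_onto p; first by rewrite wp_under.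
  rewrite wp_over /Dl; move/forallP: Hc => /(_ c) /= /andP[/eqP -> _].
  by rewrite mulgV.
rewrite -(big_mkord xpredT (fun p => Dl C a p)) tele.
have -> : (inord N : 'I_N.+1) = ord_max by apply: val_inj; rewrite /= inordK.
have -> : (inord 0 : 'I_N.+1) = ord0 by apply: val_inj; rewrite /= inordK.
by move: tb; rewrite /top_col /bot_col => ->; rewrite mulgV.
Qed.

Definition Aset l0 y := [set C in knot_colorings opX D |
   (top_col C == y) && (weight phi D C == l0)].

Lemma cardA_le l0 h y y' : (forall u v, h (opX u v) = opX (h u) (h v)) ->
  injective h -> h y = y' ->
  (forall C, is_coloring opX D C -> top_col C = bot_col C ->
     weight phi D (mapc h C) = weight phi D C) ->
  #|Aset l0 y| <= #|Aset l0 y'|.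
Proof.
move=> hh hi hy hw.
rewrite -(card_imset _ (mapc_inj hi)); apply: subset_leq_card.
apply/subsetP => _ /imsetP[C hC ->]; move: hC; rewrite !inE.
case/andP=> /andP[hc tb] /andP[/eqP ty /eqP wl].
rewrite col_hom //= /top_col /bot_col !ffunE.
move: tb ty; rewrite /top_col /bot_col => /eqP tb ty.
rewrite -tb eqxx ty hy eqxx /= hw ?wl //.
Qed.

Lemma cardA_eq l0 y a : (forall b, bijective (fun y => opX y b)) ->
  #|Aset l0 y| = #|Aset l0 (opX y a)|.
Proof.
move=> bij; have [g gK Kg] := bij a.
have homR : forall u v, opX (opX u v) a = opX (opX u a) (opX v a) by move=> *; apply: dist.
apply/eqP; rewrite eqn_leq; apply/andP; split.
  apply: (@cardA_le l0 (opX^~ a)) => //; first exact: can_inj gK.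
  by move=> C hc tb; apply: weight_R.
have homg : forall u v, g (opX u v) = opX (g u) (g v).
  move=> u v; apply: (can_inj gK) => /=.
  by rewrite Kg dist !Kg.
apply: (@cardA_le l0 g) => //; first exact: can_inj Kg.
move=> C hc tb.
have e : mapc (opX^~ a) (mapc g C) = C by apply/ffunP => i; rewrite !ffunE Kg.
rewrite -{2}e weight_R //; first exact: col_hom.
by move: tb; rewrite /top_col /bot_col !ffunE => ->.
Qed.

Lemma proj_col C : is_coloring opQ D C -> is_coloring opX D (proj C).
Proof.
move=> /forallP Hc; apply/forallP => c /=; rewrite !ffunE.
move: (Hc c) => /= /andP[/eqP -> hs]; rewrite eqxx /=.
by case: (gd_sign D c) hs => /eqP ->.
Qed.

Lemma inordN : (inord N : 'I_N.+1) = ord_max.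
Proof. by apply: val_inj; rewrite /= inordK. Qed.

Lemma cardS l0 x :
  #|[set C in [set C in tangle_colorings opQ D |
               (top_col C == ((1%g, x) : Q)) && ((bot_col C).2 == x)] |
        bot_col C == (l0, x)]| = #|Aset l0 x|.
Proof.
set S := [set C in _ | _].
have injS : {in S &, injective proj}.
  move=> C1 C2; rewrite !inE => /andP[/andP[h1 /andP[/eqP t1 _]] _].
  move=> /andP[/andP[h2 /andP[/eqP t2 _]] _].
  apply: proj_inj => //; rewrite /top_col in t1 t2; by rewrite ?t1 ?t2.
rewrite -(card_in_imset injS); congr #|pred_of_set _|; apply/setP => C'.
apply/imsetP/idP.
  case=> C; rewrite !inE => /andP[/andP[h /andP[/eqP t _]] /eqP b] ->.
  rewrite proj_col //= /top_col /bot_col !ffunE.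
  rewrite /top_col in t; rewrite /bot_col in b; rewrite t b eqxx /=.
  rewrite -lamN -(lamQ h) ?inordN ?b //.
  by rewrite t.
rewrite !inE => /andP[/andP[hc /eqP tb] /andP[/eqP tx /eqP wl]].
exists (lift C'); last by rewrite proj_lift.
rewrite !inE lift_col //= /top_col /bot_col lift_top lift_bot.
by move: tb tx; rewrite /top_col /bot_col => <- ->; rewrite wl !eqxx.
Qed.

Lemma cardW l0 : #|[set C in knot_colorings opX D | weight phi D C == l0]| =
  \sum_(y : X) #|Aset l0 y|.
Proof.
rewrite -sum1_card (partition_big (@top_col n X) predT) //=.
apply: eq_bigr => y _; rewrite -sum1_card; apply: eq_bigl => C.
rewrite /Aset [in RHS]inE [in LHS]inE -andbA; congr (_ && _); exact: andbC.
Qed.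

End S.

Unset Implicit Arguments.
Set Strict Implicit.

Theorem mainTheorem4 (X : finType) (opX : X -> X -> X)
    (L : finGroupType) (phi : X -> X -> L)
    (n : nat) (D : gauss_diagram n) (x : X) :
  is_quandle opX ->
  (forall a b : L, (a * b = b * a)%g) ->
  quandle_cocycle opX phi ->
  connected_quandle (ext_op opX phi) ->
  valid_diagram D ->
  let opQ := ext_op opX phi in
  let e : (L * X)%type := (1%g, x) in
  let C0 := [set C in tangle_colorings opQ D |
               (top_col C == e) && ((bot_col C).2 == x)] in
  let C1 := col_e opQ D e :\: C0 in
  let nl := cocycle_invariant opX phi D in
  forall q : (L * X)%type,
    (((Psi opQ D e q)%:~R : rat)
     = (#|X|%:R)^-1 * (\sum_(l : L | (l, x) == q) (nl l)%:~R)
       + (fsum C1 (@bot_col n (L * X)%type) q)%:~R)%R.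
Proof.
move=> [idem bij dist] LC [_ cocy] conQ [inj _] opQ e C0 C1 nl q.
rewrite /Psi /fsum !ffunE.
have -> : #|[set i in col_e opQ D e | bot_col i == q]| =
   (#|[set C in C0 | bot_col C == q]| + #|[set C in C1 | bot_col C == q]|)%N.
  set A := [set C in col_e opQ D e | bot_col C == q].
  have E1 : [set C in C0 | bot_col C == q] = A :&: C0.
    apply/setP => C; rewrite !inE.
    by case: (is_coloring opQ D C); case: (top_col C == e); case: ((bot_col C).2 == x); case: (bot_col C == q).
  have E2 : [set C in C1 | bot_col C == q] = A :\: C0.
    apply/setP => C; rewrite !inE.
    by case: (is_coloring opQ D C); case: (top_col C == e); case: ((bot_col C).2 == x); case: (bot_col C == q).
  by rewrite E1 E2 cardsID.
rewrite PoszD -!pmulrn natrD; congr (_ + _)%R.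
have cX : (0 < #|X|)%N by apply/card_gt0P; exists x.
case: q => l0 q2.
have [<- | nq] := eqVneq x q2; last first.
  rewrite big_pred0; last by move=> l; rewrite xpair_eqE (negbTE nq) andbF.
  rewrite mulr0.
  apply/eqP; rewrite pnatr_eq0 cards_eq0; apply/eqP/setP => C; rewrite !inE.
  apply/negbTE; apply/negP => /andP[/and3P[_ _ /eqP h] /eqP h'].
  by rewrite h' /= in h; rewrite h eqxx in nq.
rewrite (big_pred1 l0); last by move=> l; rewrite xpair_eqE eqxx andbT.
rewrite /nl /cocycle_invariant /fsum ffunE -pmulrn.
rewrite cardW (eq_bigr (fun _ => #|Aset opX phi D l0 x|)); last first.
  move=> y _.
  set P := [pred u : (L * X)%type | #|Aset opX phi D l0 u.2| == #|Aset opX phi D l0 x|].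
  have cl : closed [rel u v | [exists a, (v == opQ u a) || (u == opQ v a)]] P.
    move=> u v /= /existsP[b /orP[/eqP -> | /eqP ->]]; rewrite !inE /= -cardA_eq //.
  have := closed_connect cl (conQ (1%g, x) (1%g, y)).
  by rewrite !inE /= eqxx => /esym/eqP.
rewrite sum_nat_const.
have -> : #|[pred _ : X | true]| = #|X| by [].
rewrite natrM mulrA mulVf ?mul1r; last by rewrite pnatr_eq0 -lt0n.
by rewrite /C0 /e cardS.
Qed.
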